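(* Let $Z=\{P_1,\dots,P_r\}\subset\mathbb{P}^2$ be a finite set of points, let $m>n$ be positive integers and $\alpha=\alpha(I(mZ))-\alpha(I(nZ))$. Let $C$ be an effective divisor of degree $\alpha(I(mZ))$ with $\operatorname{ord}_{P_i}C\ge m$ for all $i$, and let $C=\sum_j a_jC_j$ be its decomposition into distinct irreducible components with multiplicities $a_j\ge1$. Put $\gamma_j=\deg(C_j)$, $m_i^{(j)}=\operatorname{ord}_{P_i}C_j$, $\mathbf{m}^{(j)}=(m_1^{(j)},\dots,m_r^{(j)})$, $n_i^{(j)}=\max\{m_i^{(j)}-(m-n),0\}$, $\mathbf{n}^{(j)}=(n_1^{(j)},\dots,n_r^{(j)})$. Then for each $j$: (i) $\gamma_j=\alpha(I(\mathbf{m}^{(j)}Z))$; (ii) $\alpha(I(\mathbf{m}^{(j)}Z))-\alpha(I(\mathbf{n}^{(j)}Z))\le\alpha$.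
   Context: Work over an algebraically closed field $\mathbb{K}$ of characteristic zero, $R=\mathbb{K}[x_0,x_1,x_2]$. For a point $P\in\mathbb{P}^2$, $I(P)\subset R$ is its homogeneous maximal ideal. For $Z=\{P_1,\dots,P_r\}$ and non-negative integers $\mathbf{m}=(m_1,\dots,m_r)$, $I(\mathbf{m}Z)=I(P_1)^{m_1}\cap\dots\cap I(P_r)^{m_r}$ (with $I(P)^0=R$); $I(mZ)$ is this with all $m_i=m$. For a homogeneous ideal $J$, $\alpha(J)=\min\{n: J_n\neq0\}$ is its initial degree (so $\alpha(R)=0$). $\operatorname{ord}_P$ denotes multiplicity of a divisor at $P$. *)

(* Defs.v *)
From HB Require Import structures.
From mathcomp Require Import all_boot all_order all_algebra.
From mathcomp Require Import mpoly.
From Stdlib Require Import ClassicalEpsilon.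
Set Implicit Arguments. Unset Strict Implicit. Unset Printing Implicit Defensive.
Import Order.TTheory GRing.Theory Num.Theory.
Local Open Scope ring_scope.

Section Defs.
Variable K : fieldType.

(* R = K[x0,x1,x2]; a point of P^2 is given by homogeneous coordinates
   v : 'I_3 -> K, v <> 0. *)
Definition pt_nonzero (v : 'I_3 -> K) : Prop := exists i, v i != 0.

Definition same_point (v w : 'I_3 -> K) : Prop := exists c : K, c != 0 /\ v = (fun i => c * w i).

(* a linear form vanishing at P: a generator of the homogeneous maximal ideal I(P) *)
Definition lin_van (P : 'I_3 -> K) (l : {mpoly K[3]}) : Prop :=
  l \is 1.-homog /\ l.@[P] = 0.

(* inIpow P k F  <->  F belongs to I(P)^k (ideal generated by k-fold
   products of elements of I(P); I(P)^0 = R). *)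
Inductive inIpow (P : 'I_3 -> K) : nat -> {mpoly K[3]} -> Prop :=
| Ipow0 F : inIpow P 0 F
| Ipow_zero k : inIpow P k 0
| IpowS k g l : inIpow P k g -> lin_van P l -> inIpow P k.+1 (g * l)
| IpowD k F G : inIpow P k F -> inIpow P k G -> inIpow P k (F + G).

(* membership in I(m Z) = \bigcap_i I(P_i)^(m_i) *)
Definition inImZ r (P : 'I_r -> 'I_3 -> K) (ms : 'I_r -> nat) (F : {mpoly K[3]}) : Prop :=
  forall i, inIpow (P i) (ms i) F.

Definition has_deg r (P : 'I_r -> 'I_3 -> K) (ms : 'I_r -> nat) (d : nat) : Prop :=
  exists F : {mpoly K[3]}, [/\ F != 0, F \is d.-homog & inImZ P ms F].

Definition pbool (Q : Prop) : bool :=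
  if excluded_middle_informative Q then true else false.

Definition has_degb r (P : 'I_r -> 'I_3 -> K) (ms : 'I_r -> nat) : pred nat :=
  fun d => pbool (has_deg P ms d).

(* alpha(I(m Z)) : initial degree (0 by convention if the ideal were zero,
   which never happens) *)
Definition alpha r (P : 'I_r -> 'I_3 -> K) (ms : 'I_r -> nat) : nat :=
  match excluded_middle_informative (exists d, has_degb P ms d) with
  | left h => ex_minn h
  | right _ => 0%N
  end.

(* ord_P F : largest k with F in I(P)^k (for F nonzero homogeneous such a k
   is at most deg F < msize F) *)
Definition ord (P : 'I_3 -> K) (F : {mpoly K[3]}) : nat :=
  \max_(k < (msize F).+1 | pbool (inIpow P k F)) k.

Definition mirreducible (G : {mpoly K[3]}) : Prop :=
  G != 0 /\ ~~ (G \is a GRing.unit) /\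
  forall A B : {mpoly K[3]}, G = A * B -> (A \is a GRing.unit) || (B \is a GRing.unit).

Definition massoc (G H : {mpoly K[3]}) : Prop := exists c : K, c != 0 /\ G = c *: H.

End Defs.

(* Main.v *)
Require Import Defs.
From HB Require Import structures.
From mathcomp Require Import all_boot all_order all_algebra.
From mathcomp Require Import mpoly.
From mathcomp Require Import zify.
From Stdlib Require Import ClassicalEpsilon.
Import Order.TTheory GRing.Theory Num.Theory.
Local Open Scope ring_scope.
Set Implicit Arguments. Unset Strict Implicit.
Definition o0 : 'I_3 := ord0.

Section Ideal.
Variable K : fieldType.
Local Notation T := {mpoly K[3]}.
Variable P : 'I_3 -> K.

Lemma inIpow_mull k F (h : T) : inIpow P k F -> inIpow P k (h * F).
Proof.
elim=> [G|j|j g l _ IH hl|j F1 F2 _ IH1 _ IH2].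
- exact: Ipow0.
- by rewrite mulr0; apply: Ipow_zero.
- by rewrite mulrA; apply: IpowS.
- by rewrite mulrDr; apply: IpowD.
Qed.

Lemma inIpow_mulr k F (h : T) : inIpow P k F -> inIpow P k (F * h).
Proof. by rewrite mulrC; apply: inIpow_mull. Qed.

Lemma inIpowM a b F G : inIpow P a F -> inIpow P b G -> inIpow P (a + b) (F * G).
Proof.
move=> hF; elim=> [G'|j|j g l _ IH hl|j F1 F2 _ IH1 _ IH2].
- by rewrite addn0; apply: inIpow_mulr.
- by rewrite mulr0; apply: Ipow_zero.
- by rewrite mulrA addnS; apply: IpowS.
- by rewrite mulrDr; apply: IpowD.
Qed.

Lemma inIpow_down1_aux k' F : inIpow P k' F -> forall k, k' = k.+1 -> inIpow P k F.
Proof.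
elim=> [G|j|j g l hg _ hl|j F1 F2 _ IH1 _ IH2] k0 eqk.
- by [].
- exact: Ipow_zero.
- by case: eqk => <-; apply: inIpow_mulr.
- by apply: IpowD; [apply: IH1|apply: IH2].
Qed.

Lemma inIpow_down1 k F : inIpow P k.+1 F -> inIpow P k F.
Proof. by move=> h; apply: (inIpow_down1_aux h). Qed.

Lemma inIpow_down k k' F : (k <= k')%N -> inIpow P k' F -> inIpow P k F.
Proof.
move=> hk; rewrite -(subnKC hk); elim: (k' - k)%N => [|d IH]; first by rewrite addn0.
by rewrite addnS => /inIpow_down1.
Qed.

Lemma inIpow_sum (I : Type) (s : seq I) (Fs : I -> T) k :
  (forall i, inIpow P k (Fs i)) -> inIpow P k (\sum_(i <- s) Fs i).
Proof.
move=> h; elim: s => [|x s IH]; first by rewrite big_nil; apply: Ipow_zero.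
by rewrite big_cons; apply: IpowD.
Qed.

Lemma inIpowZ k F c : inIpow P k F -> inIpow P k (c *: F).
Proof. by rewrite -mul_mpolyC; apply: inIpow_mull. Qed.

Lemma inIpow_lin l : lin_van P l -> inIpow P 1 l.
Proof. by move=> hl; rewrite -(mul1r l); apply: IpowS => //; apply: Ipow0. Qed.

Lemma inIpowX l e : lin_van P l -> inIpow P e (l ^+ e).
Proof.
move=> hl; elim: e => [|e IH]; first exact: Ipow0.
by rewrite exprSr; apply: IpowS.
Qed.
End Ideal.

Section Gen.
Variable K : fieldType.
Local Notation T := {mpoly K[3]}.

Lemma rmorph_comp (S : comRingType) (f g : {rmorphism T -> S}) (lq : 3.-tuple T) :
  (forall c, f c%:MP = g c%:MP) -> (forall i, f (tnth lq i) = g 'X_i) ->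
  forall F, f (F \mPo lq) = g F.
Proof.
move=> hC hX F; rewrite {2}(mpolyE F) comp_mpolyEX !rmorph_sum; apply: eq_bigr => mm _.
rewrite -!mul_mpolyC !rmorphM hC; congr (_ * _).
rewrite comp_mpolyX mpolyXE_id !rmorph_prod; apply: eq_bigr => i _.
by rewrite !rmorphXn hX.
Qed.

Definition J k (G : T) := {in msupp G, forall mm : 'X_{1..3}, (k <= mdeg mm - mm o0)%N}.

Lemma mm0_le (mm : 'X_{1..3}) : (mm o0 <= mdeg mm)%N.
Proof. by rewrite mdegE (bigD1 o0) //= leq_addr. Qed.

Lemma J0 G : J 0 G. Proof. by []. Qed.
Lemma J_zero k : J k 0. Proof. by move=> mm; rewrite msupp0. Qed.
Lemma JD k F G : J k F -> J k G -> J k (F + G).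
Proof.
move=> hF hG mm /msuppD_le; rewrite mem_cat => /orP [/hF|/hG] //.
Qed.
Lemma JM a b F G : J a F -> J b G -> J (a + b) (F * G).
Proof.
move=> hF hG mm /msuppM_le /allpairsP [[m1 m2] [/= /hF h1 /hG h2 ->]].
rewrite mdegD mnmDE; have := mm0_le m1; have := mm0_le m2; lia.
Qed.

Definition vv (G : T) := (mdeg (mlead G) - mlead G o0)%N.

Lemma lead_le0 (mm L : 'X_{1..3}) : (mm <= L)%O -> mdeg mm = mdeg L -> (mm o0 <= L o0)%N.
Proof.
rewrite le_eqVlt => /orP [/eqP -> //|hlt] hd.
case/(ltmcP hd): hlt => i hi hlti.
case: (posnP i) => [i0|ipos].
- have -> : o0 = i by apply: val_inj; rewrite /= i0.
  exact: ltnW.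
- by rewrite hi.
Qed.

Lemma J_vv G d k : G != 0 -> G \is d.-homog -> J k G <-> (k <= vv G)%N.
Proof.
move=> nz hd; split.
- by move=> h; apply: h; apply: mlead_supp.
- move=> hk mm hm; have hle := msupp_le_mlead hm.
  have := dhomog_mf hd hm; have := dhomog_mf hd (mlead_supp nz) => e1 e2.
  have := lead_le0 hle (etrans e2 (esym e1)).
  move: hk e1 e2; rewrite /vv /=; lia.
Qed.

Lemma vvM F G : F != 0 -> G != 0 -> vv (F * G) = (vv F + vv G)%N.
Proof.
move=> nF nG; rewrite /vv mleadM // mdegD mnmDE.
have := mm0_le (mlead F); have := mm0_le (mlead G).
move: (mlead F o0) (mlead G o0) (mdeg (mlead F)) (mdeg (mlead G)) => x y z w; lia.
Qed.

Lemma vv_le G d : G != 0 -> G \is d.-homog -> (vv G <= d)%N.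
Proof.
move=> nz hd; have := dhomog_mf hd (mlead_supp nz); rewrite /vv /=; lia.
Qed.

End Gen.
Section Pt.
Variable K : fieldType.
Local Notation T := {mpoly K[3]}.
Variable P : 'I_3 -> K.
Definition o1 : 'I_3 := @Ordinal 3 1 isT.
Definition o2 : 'I_3 := @Ordinal 3 2 isT.
Definition i0 : 'I_3 := if P o0 != 0 then o0 else if P o1 != 0 then o1 else o2.

Lemma Pi0 : pt_nonzero P -> P i0 != 0.
Proof.
case=> i hi; rewrite /i0; case: ifP => // /negbFE /eqP h0; case: ifP => // /negbFE /eqP h1.
have : i = o0 \/ i = o1 \/ i = o2.
  by clear hi; case: i => [[|[|[|//]]] ?]; [left|right;left|right;right]; apply: val_inj.
by case=> [ei|[ei|ei]]; move: hi; rewrite ei ?h0 ?h1 ?eqxx.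
Qed.

Definition tau (j : 'I_3) : 'I_3 := if j == o0 then i0 else if j == i0 then o0 else j.

Lemma tauK j : tau (tau j) = j.
Proof.
rewrite /tau; case: (eqVneq j o0) => [->|h0].
- by case: (eqVneq i0 o0) => [->|h]; rewrite ?eqxx // (negbTE h) eqxx.
- case: (eqVneq j i0) => [->|h1]; first by rewrite eqxx.
  by rewrite (negbTE h0) (negbTE h1).
Qed.

Lemma tau_eq0 j : (tau j == o0) = (j == i0).
Proof.
rewrite /tau; have [->|h0] := eqVneq j o0.
- by rewrite ?eqxx eq_sym.
- by case: (j =P i0) => [_|/eqP h1]; rewrite ?eqxx //= (negbTE h0).
Qed.

Definition Qtup : 3.-tuple T :=
  [tuple P j *: 'X_o0 + (if j == i0 then 0 else 'X_(tau j)) | j < 3].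
Definition Rtup : 3.-tuple T :=
  [tuple if k == o0 then (P i0)^-1 *: 'X_i0 else 'X_(tau k) - (P (tau k) / P i0) *: 'X_i0 | k < 3].

Definition Qm (F : T) := F \mPo Qtup.
Definition Rm (G : T) := G \mPo Rtup.

Hypothesis hP : pt_nonzero P.

End Pt.
Section Pt2.
Variable K : fieldType.
Local Notation T := {mpoly K[3]}.
Variable P : 'I_3 -> K.
Hypothesis hP : pt_nonzero P.

Lemma RQ F : Rm P (Qm P F) = F.
Proof.
rewrite /Rm /Qm.
apply: (@rmorph_comp K T (comp_mpoly (Rtup P)) idfun (Qtup P)) => [c|i].
- exact: comp_mpolyC.
- rewrite tnth_map tnth_ord_tuple /=.
  have hi0 := Pi0 hP.
  rewrite raddfD /= comp_mpolyZ !comp_mpolyXU -!tnth_nth !tnth_map !tnth_ord_tuple eqxx.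
  case: (eqVneq i (i0 P)) => [->|ne].
  - by rewrite comp_mpoly0 addr0 scalerA mulfV // scale1r.
  - rewrite comp_mpolyXU -tnth_nth tnth_map tnth_ord_tuple tau_eq0 (negbTE ne) tauK.
    by rewrite scalerA addrC -addrA mulrC addNr addr0.
Qed.

Lemma X_homog (i : 'I_3) : ('X_i : T) \is 1.-homog.
Proof. by rewrite dhomogX; apply/eqP; exact: mdeg1. Qed.

Lemma prod_homog (lq : 3.-tuple T) (mm : 'X_{1..3}) :
  (forall i, tnth lq i \is 1.-homog) ->
  \prod_(i < 3) tnth lq i ^+ mm i \is (mdeg mm).-homog.
Proof.
move=> hl; rewrite mdegE.
elim/big_rec2: _ => [|i d' p _ hp]; first exact: dhomog1.
by apply: dhomogM => //; have := dhomogMn (mm i) (hl i); rewrite mul1n.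
Qed.

Lemma comp_homog (lq : 3.-tuple T) F d :
  (forall i, tnth lq i \is 1.-homog) -> F \is d.-homog -> F \mPo lq \is d.-homog.
Proof.
move=> hl hF; rewrite comp_mpolyE big_seq; apply: rpred_sum => mm hm.
apply: rpredZ; rewrite -(dhomog_mf hF hm); exact: prod_homog.
Qed.

Lemma Qtup_homog i : tnth (Qtup P) i \is 1.-homog.
Proof.
rewrite tnth_map tnth_ord_tuple; apply: rpredD; first by apply: rpredZ; exact: X_homog.
by case: ifP => _; [exact: rpred0|exact: X_homog].
Qed.

Lemma Rtup_homog i : tnth (Rtup P) i \is 1.-homog.
Proof.
rewrite tnth_map tnth_ord_tuple; case: ifP => _.
  by apply: rpredZ; exact: X_homog.
by apply: rpredB; [exact: X_homog| apply: rpredZ; exact: X_homog].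
Qed.

Lemma Qm_homog F d : F \is d.-homog -> Qm P F \is d.-homog.
Proof. by apply: comp_homog; apply: Qtup_homog. Qed.

Definition e0 : 'I_3 -> K := fun i => (i == o0)%:R.

Lemma meval_Qm F : meval e0 (Qm P F) = meval P F.
Proof.
apply: (@rmorph_comp K K (meval e0) (meval P) (Qtup P)) => [c|i].
- by rewrite /= !mevalC.
- rewrite /= tnth_map tnth_ord_tuple mevalXU mevalD mevalZ mevalXU /e0 eqxx mulr1.
  case: ifP => h; first by rewrite meval0 addr0.
  by rewrite mevalXU tau_eq0 h addr0.
Qed.

Lemma coef_U0 G : G \is 1.-homog -> G@_(U_(o0))%MM = meval e0 G.
Proof.
move=> hG; rewrite {1}(mpolyE G) mevalE raddf_sum /=; rewrite !big_seq; apply: eq_bigr => mm hm.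
rewrite mcoeffZ mcoeffX; congr (_ * _).
have : mdeg mm == 1%N by apply/eqP; exact: (dhomog_mf hG hm).
case/mdeg1P => k /eqP ->.
rewrite (bigD1 k) //= mnm1E eqxx expr1 big1 ?mulr1; last first.
  by move=> i ne; rewrite mnm1E eq_sym (negbTE ne) expr0.
rewrite /e0; case: (eqVneq k o0) => [->|ne]; first by rewrite eqxx.
suff -> : (U_(k)%MM == U_(o0)%MM) = false by [].
apply/negbTE/negP => /eqP/(congr1 (fun mm : 'X_{1..3} => mm k)); rewrite !mnm1E eqxx.
by rewrite eq_sym (negbTE ne).
Qed.

Lemma lin_J1 l : lin_van P l -> J 1 (Qm P l).
Proof.
case=> hl hv mm hm.
have hQ := Qm_homog hl.
have hd : mdeg mm = 1%N by exact: (dhomog_mf hQ hm).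
rewrite hd; case: (posnP (mm o0)) => [->//|pos]; exfalso.
have : mdeg mm == 1%N by rewrite hd.
case/mdeg1P => k /eqP ek.
have ko : k = o0.
  by apply/eqP; move: pos; rewrite ek mnm1E; case: (k == o0).
move: hm; rewrite mcoeff_msupp ek ko coef_U0 // meval_Qm hv.
by rewrite eqxx.
Qed.

Lemma inIpow_J k F : inIpow P k F -> J k (Qm P F).
Proof.
elim=> [G|j|j g l _ IH hl|j F1 F2 _ IH1 _ IH2].
- exact: J0.
- rewrite /Qm raddf0; exact: J_zero.
- rewrite /Qm rmorphM -addn1; apply: JM => //; exact: lin_J1.
- rewrite /Qm raddfD; exact: JD.
Qed.

Lemma Rtup_van i : i != o0 -> lin_van P (tnth (Rtup P) i).
Proof.
move=> ne; split; first exact: Rtup_homog.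
rewrite tnth_map tnth_ord_tuple (negbTE ne) mevalB mevalZ !mevalXU.
by rewrite mulfVK ?Pi0 // subrr.
Qed.

Lemma inIpow_prod (f : 'I_3 -> T) (e : 'I_3 -> nat) :
  (forall i, inIpow P (e i) (f i)) -> inIpow P (\sum_i e i) (\prod_i f i).
Proof.
move=> h; elim/big_rec2: _ => [|i d' p _ hp]; first exact: Ipow0.
exact: inIpowM.
Qed.

Lemma J_inIpow k F : J k (Qm P F) -> inIpow P k F.
Proof.
move=> hJ; rewrite -(RQ F) /Rm comp_mpolyE big_seq big_mkcond /=.
apply: inIpow_sum => mm; case: ifP => hm; last exact: Ipow_zero.
apply: inIpowZ.
have hk := hJ mm hm.
apply: (inIpow_down (k' := \sum_i (if i == o0 then 0%N else mm i))).
  move: hk; rewrite mdegE (bigD1 o0) //= addKn.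
  have -> : (\sum_i (if i == o0 then 0 else mm i) = \sum_(i < 3 | i != o0) mm i)%N => //.
  by rewrite (bigD1 o0) //= ?eqxx add0n; apply: eq_bigr => i /negbTE ->.
apply: inIpow_prod => i; case: (eqVneq i o0) => [_|ne]; first exact: Ipow0.
exact: inIpowX (Rtup_van ne).
Qed.

Lemma Qm_neq0 F : F != 0 -> Qm P F != 0.
Proof. by apply: contraNneq => h; rewrite -(RQ F) h /Rm raddf0. Qed.

Lemma key1 F d k : F != 0 -> F \is d.-homog -> inIpow P k F <-> (k <= vv (Qm P F))%N.
Proof.
move=> nz hd; rewrite -(J_vv k (Qm_neq0 nz) (Qm_homog hd)).
by split; [apply: inIpow_J|apply: J_inIpow].
Qed.

Lemma key2 F G : F != 0 -> G != 0 -> vv (Qm P (F * G)) = (vv (Qm P F) + vv (Qm P G))%N.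
Proof. by move=> nF nG; rewrite /Qm rmorphM vvM //; apply: Qm_neq0. Qed.

Lemma key3 F d : F != 0 -> F \is d.-homog -> (vv (Qm P F) <= d)%N.
Proof. by move=> nz hd; apply: vv_le (Qm_neq0 nz) (Qm_homog hd). Qed.
End Pt2.

Lemma pboolP (Q : Prop) : pbool Q = true <-> Q.
Proof. by rewrite /pbool; case: excluded_middle_informative. Qed.

Lemma ordE (K : fieldType) (P : 'I_3 -> K) (hP : pt_nonzero P) (F : {mpoly K[3]}) :
  F != 0 -> F \is (msize F).-1.-homog -> ord P F = vv (Qm P F).
Proof.
move=> nz hd; rewrite /ord; apply/eqP; rewrite eqn_leq; apply/andP; split.
- apply/bigmax_leqP => k /pboolP hk.
  exact: ((key1 hP (nat_of_ord k) nz hd).1 hk).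
- have hlt : (vv (Qm P F) < (msize F).+1)%N.
    have := key3 hP nz hd; lia.
  apply: (@leq_bigmax_cond _ _ _ (Ordinal hlt)) => /=.
  by apply/pboolP; apply/(key1 hP _ nz hd).
Qed.

Lemma alpha_spec (K : fieldType) r (P : 'I_r -> 'I_3 -> K) ms d :
  has_deg P ms d -> has_deg P ms (alpha P ms) /\ (alpha P ms <= d)%N.
Proof.
move=> h; rewrite /alpha; case: excluded_middle_informative => [ex|nex].
- case: ex_minnP => a /pboolP ha hmin; split => //.
  by apply: hmin; apply/pboolP.
- by exfalso; apply: nex; exists d; apply/pboolP.
Qed.
Lemma homog_prod_ex (K : fieldType) s (Cs : 'I_s -> {mpoly K[3]}) (a : 'I_s -> nat) (Q : pred 'I_s) :
  (forall k, exists d, Cs k \is d.-homog) ->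
  exists e, \prod_(k < s | Q k) Cs k ^+ a k \is e.-homog.
Proof.
move=> h; elim/big_rec: _ => [|k p _ [e he]]; first by exists 0%N; exact: dhomog1.
have [d hd] := h k; exists (d * a k + e)%N; apply: dhomogM => //; exact: dhomogMn.
Qed.

Unset Implicit Arguments.
Theorem corollary2p2
  (K : closedFieldType) (charK0 : [pchar K] =i pred0)
  (r : nat) (P : 'I_r -> 'I_3 -> K)
  (hP : forall i, pt_nonzero (P i))
  (hdist : forall i j, i != j -> ~ same_point (P i) (P j))
  (m n : nat) (hn : (0 < n)%N) (hmn : (n < m)%N)
  (C : {mpoly K[3]})
  (hC0 : C != 0)
  (hCdeg : C \is (alpha P (fun _ => m)).-homog)
  (hCord : forall i, inIpow (P i) m C)
  (s : nat) (c : K) (Cs : 'I_s -> {mpoly K[3]}) (a : 'I_s -> nat)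
  (hc : c != 0)
  (hdec : C = c *: \prod_(j < s) Cs j ^+ a j)
  (hirr : forall j, mirreducible (Cs j))
  (hhom : forall j, Cs j \is (msize (Cs j)).-1.-homog)
  (hdistinct : forall j k, j != k -> ~ massoc (Cs j) (Cs k))
  (ha : forall j, (0 < a j)%N) :
  forall j : 'I_s,
    let gamma := (msize (Cs j)).-1 in
    let mj := fun i => ord (P i) (Cs j) in
    let nj := fun i => (mj i - (m - n))%N in
    gamma = alpha P mj /\
    ((alpha P mj)%:Z - (alpha P nj)%:Z <=
       (alpha P (fun _ => m))%:Z - (alpha P (fun _ => n))%:Z).
Proof.
move=> j gamma mj nj.
have nzCj : Cs j != 0 by case: (hirr j).
have hCj : Cs j \is gamma.-homog := hhom j.
set Rj := c *: (Cs j ^+ (a j).-1 * \prod_(k < s | k != j) Cs k ^+ a k).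
have eC : C = Cs j * Rj.
  by rewrite hdec (bigD1 j) //= /Rj -scalerAr mulrA -exprS prednK.
have nzR : Rj != 0 by apply: contraNneq hC0 => h; rewrite eC h mulr0.
have [e hR] : exists e, Rj \is e.-homog.
  have [e1 he1] := @homog_prod_ex K s Cs a (fun k => k != j) (fun k => ex_intro (fun d => Cs k \is d.-homog) _ (hhom k)).
  exists ((msize (Cs j)).-1 * (a j).-1 + e1)%N; apply: dhomogZ; apply: dhomogM => //.
  exact: dhomogMn.
have egam : (gamma + e)%N = alpha P (fun _ => m).
  have h : C \is (gamma + e).-homog by rewrite eC; apply: dhomogM.
  exact: (dhomog_uniq hC0 h hCdeg).
pose v i F := vv (Qm (P i) F).
have hvC i : (m <= v i C)%N := (key1 (hP i) _ hC0 hCdeg).1 (hCord i).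
have hvCj i : mj i = v i (Cs j) by rewrite /mj; exact: ordE.
have hvs i : v i C = (v i (Cs j) + v i Rj)%N by rewrite /v eC key2.
have mk : forall (ms : 'I_r -> nat) X dX, X != 0 -> X \is dX.-homog ->
    (forall i, (ms i <= v i X + v i Rj)%N) -> has_deg P ms (dX + e).
  move=> ms X dX nzX hX hle; exists (X * Rj); split.
  - exact: mulf_neq0.
  - exact: dhomogM.
  - move=> i; apply/(key1 (hP i) _ (mulf_neq0 nzX nzR) (dhomogM hX hR)).
    by rewrite key2.
have inCj : forall (ms : 'I_r -> nat), (forall i, (ms i <= mj i)%N) -> has_deg P ms gamma.
  move=> ms hms; exists (Cs j); split => // i; apply/(key1 (hP i) _ nzCj hCj).
  by move: (hms i); rewrite hvCj.
have [[D [nzD hD hDin]] hle1] := alpha_spec (inCj mj (fun i => leqnn _)).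
have hmD : has_deg P (fun _ => m) (alpha P mj + e).
  apply: (mk _ D _ nzD hD) => i.
  have h1 : (mj i <= v i D)%N := (key1 (hP i) _ nzD hD).1 (hDin i).
  move: h1 (hvC i) (hvs i) (hvCj i); rewrite /=.
  move: (mj i) (v i D) (v i Rj) (v i C) (v i (Cs j)) => x1 x2 x3 x4 x5; lia.
have hle2 := (alpha_spec hmD).2.
have eg : gamma = alpha P mj by move: hle1 hle2; rewrite -egam; lia.
split => //.
have [[F [nzF hF hFin]] _] := alpha_spec (inCj nj (fun i => leq_subr _ _)).
have hnF : has_deg P (fun _ => n) (alpha P nj + e).
  apply: (mk _ F _ nzF hF) => i.
  have h1 : (nj i <= v i F)%N := (key1 (hP i) _ nzF hF).1 (hFin i).
  move: h1 (hvC i) (hvs i) (hvCj i); rewrite /= /nj.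
  move: (mj i) (v i F) (v i Rj) (v i C) (v i (Cs j)) => x1 x2 x3 x4 x5; lia.
have hle3 := (alpha_spec hnF).2.
rewrite -eg; move: hle3 egam; lia.
Qed.
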